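(* Let $M>0$ and assume (Amax) and (Amin). Then the closure $\mathrm{Cl}(\mathcal D(M))$ of $\mathcal D(M)$ in $L^\infty([0,1])$ (supremum norm) is a compact subset of $C^0([0,1])$.
   Context: Fix integers $K\ge1$, $d\ge1$, $\sigma_-\in(0,1)$; $[K']=\{1,\dots,K'\}$; $\Delta_{K'}$ = probability vectors on $[K']$; $\Sigma^{\sigma_-}_{K'}$ = $K'\times K'$ stochastic matrices with all entries $\ge\sigma_-$; $\mathbb R_d[X]$ = real polynomials of degree $\le d$ viewed as functions on $\mathbb R_+$; $\Gamma$ a compact (for pointwise convergence) set of probability densities on $\mathbb R$. $\Theta=\bigcup_{K'=1}^K\{[K']\}\times\Delta_{K'}\times\Sigma^{\sigma_-}_{K'}\times\Gamma^{K'}\times(\mathbb R_d[X])^{K'}$, elements $\theta=(K^\theta,\pi^\theta,Q^\theta,\gamma^\theta,T^\theta)$ with trends $T^\theta_x\in\mathbb R_d[X]$. The true parameter is $\theta^*=(K^*,\pi^*,Q^*,\gamma^*,T^* )\in\Theta$. (Amax): there is a nonincreasing $g:\mathbb R_+\to\mathbb R_+$, $g\to0$ at $\infty$, with $\gamma(z)\le g(|z|)$ for all $\gamma\in\Gamma$. (Amin): there is a nonincreasing $m$ with $\gamma(z)\ge m(|z|)>0$ for all $\gamma\in\Gamma$. Blocks. $x\mathcal R^*x'$ iff $T^*_x-T^*_{x'}$ is constant; $\mathcal B^*=[K^*]/\mathcal R^*$, $\mathbf b^*$ the quotient map; $\mathbb T^*_b=T^*_{\min b}$; $\Delta(x)=T^*_x(1)-\mathbb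 T^*_{\mathbf b^*(x)}(1)$, $\|\Delta\|_\infty=\max_x|\Delta(x)|$. $E(t)=\min_{b\ne b'}|\mathbb T^*_b(t)-\mathbb T^*_{b'}(t)|$ ($+\infty$ if one block), $n_1(M)=\inf\{n:\forall t\ge n,\ E(t)>2M\}$. $\Theta^{OK}_n(M)$ is the set of $\theta\in\Theta$ such that every $x^*\in[K^*]$ has some $x\in[K^\theta]$ with $\sup_{[0,n]}|T^*_{x^*}-T^\theta_x|\le M$, and every $x\in[K^\theta]$ has some $x^*$ with $\sup_{[0,n]}|T^*_{x^*}-T^\theta_x|\le M$. For $n\ge n_1(M+\|\Delta\|_\infty)$ and $\theta\in\Theta^{OK}_n(M)$, $\mathbf b^\theta(x)$ is the unique $b\in\mathcal B^*$ with $\max_{t\in\{1,\dots,n\}}|\mathbb T^*_b(t)-T^\theta_x(t)|\le M+\|\Delta\|_\infty$, and $D^{\theta,n}_x:u\in[0,1]\mapsto T^\theta_x(nu)-\mathbb T^*_{\mathbf b^\theta(x)}(nu)$. Finally $\mathcal D(M)=\bigcup_{n\ge\max(4K(d+1),\,n_1(M+\|\Delta\|_\infty))}\{D^{\theta,n}_x:\theta\in\Theta^{OK}_n(M),x\in[K^\theta]\}$. *)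

(* Defs.v *)
From HB Require Import structures.
From mathcomp Require Import all_boot all_order all_algebra.
From mathcomp Require Import all_classical all_reals all_analysis.
Set Implicit Arguments. Unset Strict Implicit. Unset Printing Implicit Defensive.
Import Order.TTheory GRing.Theory Num.Theory.
Import numFieldNormedType.Exports.
Local Open Scope classical_set_scope.
Local Open Scope ring_scope.

Section Defs.
Variable R : realType.

Record param := Param {
  pK : nat;
  ppi : 'I_pK -> R;
  pQ : 'I_pK -> 'I_pK -> R;
  pgam : 'I_pK -> R -> R;
  pT : 'I_pK -> {poly R} }.
Arguments ppi : clear implicits.
Arguments pQ : clear implicits.
Arguments pgam : clear implicits.
Arguments pT : clear implicits.

Definition is_density (g : R -> R) : Prop :=
  [/\ measurable_fun [set: R] g, (forall z, 0 <= g z) &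
      (\int[@lebesgue_measure R]_x (g x)%:E = 1)%E].

Definition inTheta (K d : nat) (sigm : R) (Gam : set (R -> R)) (th : param) : Prop :=
  [/\ (1 <= pK th <= K)%N,
      (forall x, 0 <= ppi th x) /\ \sum_x ppi th x = 1,
      (forall x y, sigm <= pQ th x y) /\ (forall x, \sum_y pQ th x y = 1),
      (forall x, Gam (pgam th x)) &
      (forall x, (size (pT th x) <= d.+1)%N)].

Variable ths : param. (* the true parameter theta^* *)

Local Notation Ks := (pK ths).
Local Notation Ts := (pT ths).

Definition blockrel (x y : 'I_Ks) : Prop :=
  exists c : R, forall t : R, 0 <= t -> (Ts x).[t] - (Ts y).[t] = c.

(* min of the block of x; the block b of x is represented by rep x,
   and \mathbb T^*_b = T^*_{min b} = Ts (rep x). *)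
Definition rep (x : 'I_Ks) : 'I_Ks :=
  [arg min_(y < x | `[< blockrel y x >]) (y : nat)].

Definition Delta (x : 'I_Ks) : R := (Ts x).[1] - (Ts (rep x)).[1].

Definition normDelta : R := \big[Num.max/0]_(x : 'I_Ks) `|Delta x|.

(* E(t) > c, with E(t) = min over pairs of distinct blocks (+oo if one block) *)
Definition E_gt (c t : R) : Prop :=
  forall r r' : 'I_Ks, rep r = r -> rep r' = r' -> r <> r' ->
    c < `|(Ts r).[t] - (Ts r').[t]|.

Definition n1_set (M' : R) (n : nat) : Prop :=
  forall t : R, n%:R <= t -> E_gt (2 * M') t.

(* n >= n_1(M') = inf (n1_set M') *)
Definition ge_n1 (M' : R) (n : nat) : Prop :=
  exists2 m : nat, (m <= n)%N & n1_set M' m.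

(* theta \in Theta^OK_n(M) (trend condition; membership in Theta separate) *)
Definition ThetaOK (n : nat) (M : R) (th : param) : Prop :=
  (forall xs : 'I_Ks, exists x : 'I_(pK th),
     forall t : R, 0 <= t <= n%:R -> `|(Ts xs).[t] - (pT th x).[t]| <= M) /\
  (forall x : 'I_(pK th), exists xs : 'I_Ks,
     forall t : R, 0 <= t <= n%:R -> `|(Ts xs).[t] - (pT th x).[t]| <= M).

Definition bcond (n : nat) (M : R) (th : param) (x : 'I_(pK th)) (r : 'I_Ks) : Prop :=
  rep r = r /\
  forall i : nat, (1 <= i <= n)%N ->
    `|(Ts r).[i%:R] - (pT th x).[i%:R]| <= M + normDelta.
Arguments bcond : clear implicits.

Definition Dset (K d : nat) (sigm : R) (Gam : set (R -> R)) (M : R) : set (R -> R) :=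
  [set f | exists (n : nat) (th : param) (x : 'I_(pK th)) (r : 'I_Ks),
     [/\ (4 * K * d.+1 <= n)%N /\ ge_n1 (M + normDelta) n,
         inTheta K d sigm Gam th /\ ThetaOK n M th,
         bcond n M th x r /\ (forall r', bcond n M th x r' -> r' = r) &
         f = fun u => (pT th x).[n%:R * u] - (Ts r).[n%:R * u]]].

End Defs.

(* Main.v *)
Require Import Defs.
From HB Require Import structures.
From mathcomp Require Import all_boot all_order all_algebra.
From mathcomp Require Import all_classical all_reals all_analysis.
Import Order.TTheory GRing.Theory Num.Theory.
Import numFieldNormedType.Exports.
Local Open Scope classical_set_scope.
Local Open Scope ring_scope.

From mathcomp Require Import ring lra zify.
Lemma compact_closure_unif (X : uniformType) (K : set X) :
  compact K -> compact (closure K).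
Proof.
move=> cK F PF FclK.
pose D := [set BE : set X * set (X * X) | F BE.1 /\ entourage BE.2].
pose f := fun BE : set X * set (X * X) =>
  K `&` [set y | exists2 b, BE.1 b & BE.2 (b, y)].
have GF : Filter (filter_from D f).
  apply: filter_from_filter.
    by exists (setT, setT); split; [exact: filterT| exact: entourageT].
  move=> [B1 E1] [B2 E2] [/= FB1 eE1] [/= FB2 eE2].
  exists (B1 `&` B2, E1 `&` E2); first by split; [exact: filterI|exact: filterI].
  move=> y [Ky [b [/= b1 b2] [/= e1 e2]]]; split; split => //.
    by exists b.
  by exists b.
have PG : ProperFilter (filter_from D f).
  apply: filter_from_proper => -[B E] [/= FB eE].
  have [b [Bb clb]] := filter_ex (filterI FB FclK).
  have [y [Ky Eby]] := clb _ (nbhs_entourage b eE).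
  exists y; split => //; exists b => //; move/xsectionP: Eby => //.
have GK : filter_from D f K.
  exists (setT, setT); first by split; [exact: filterT| exact: entourageT].
  by move=> y [].
have [x [Kx clx]] := cK _ PG GK.
exists x; split; first exact: subset_closure.
move=> B C FB /nbhsP [E eE sEC].
have eE1 := entourage_split_ent eE.
have [y [[Ky [b Bb Eby]] Exy]] := clx _ _ (ex_intro2 _ _ (B, (split_ent E)^-1%relation) (conj FB (entourage_inv eE1)) (fun z h => h))
   (nbhs_entourage x eE1).
exists b; split => //; apply: sEC; apply/xsectionP.
move/xsectionP: Exy => Exy. exact: (entourage_split y eE Exy Eby).
Qed.
Lemma lag_bound (K : realFieldType) n (x : nat -> K) (n0 : (0 < n)%N)
  (xi : injective x) (i : 'I_n) (t c : K) :
  0 <= c -> (forall m : 'I_n, m != i -> `|t - x m| <= c * `|x i - x m|) ->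
  `|(tnth (n.-lagrange x) i : {poly K}).[t]| <= c ^+ n.-1.
Proof.
move=> c0 H; rewrite lagrangeE //= hornerM hornerC !horner_prod.
under eq_bigr do rewrite hornerXsubC.
under [X in _ * X]eq_bigr do rewrite hornerXsubC.
rewrite mulrC -prodf_div normr_prod.
have -> : c ^+ n.-1 = \prod_(j < n | j != i) c.
  by rewrite prodr_const; congr (_ ^+ _); rewrite (cardC1 i) card_ord.
apply: ler_prod => j ji; rewrite normr_ge0 /=.
have nz : 0 < `|x i - x j|.
  rewrite normr_gt0 subr_eq0; apply/negP => /eqP /xi ij.
  by move: ji; rewrite -val_eqE /= ij eqxx.
by rewrite normrM normfV ler_pdivrMr // H.
Qed.
Lemma grid_bound (R : realFieldType) (d n : nat) (p : {poly R}) (C : R) :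
  (size p <= d.+1)%N -> (d.+1 <= n)%N ->
  (forall i, (1 <= i <= n)%N -> `|p.[i%:R]| <= C) ->
  forall t, 0 <= t <= n%:R -> `|p.[t]| <= d.+1%:R * (C * (2 * d.+1%:R) ^+ d).
Proof.
move=> sp dn hp t /andP[t0 tn].
set q := (n %/ d.+1)%N.
have q1 : (1 <= q)%N by rewrite /q divn_gt0.
have qn : (q * d.+1 <= n)%N by exact: leq_trunc_div.
have nq : (n < q.+1 * d.+1)%N by exact: ltn_ceil.
pose x := fun j : nat => ((1 + j * q)%N)%:R : R.
have xi : injective x.
  move=> j k /eqP; rewrite /x eqr_nat => /eqP h; apply/eqP.
  by rewrite -(eqn_pmul2r q1); apply/eqP; lia.
rewrite (lagrange_gen (ltn0Sn d) xi sp) horner_sum.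
apply: le_trans (ler_norm_sum _ _ _) _.
have -> : d.+1%:R * (C * (2 * d.+1%:R) ^+ d) = \sum_(j < d.+1) (C * (2 * d.+1%:R) ^+ d) :> R.
  by rewrite sumr_const card_ord mulr_natl.
apply: ler_sum => j _; rewrite hornerCM normrM.
apply: ler_pM => //.
  apply: hp; have := ltn_ord j; rewrite /=; nia.
have H := (@lag_bound R d.+1 x (ltn0Sn d) xi j t (2 * d.+1%:R)). apply: H; first by apply: mulr_ge0 => //; apply: ler0n.
move=> m mj.
have xm0 : 0 <= x m by apply: ler0n.
have xmn : x m <= n%:R.
  rewrite /x ler_nat; have := ltn_ord m; nia.
have h1 : `|t - x m| <= n%:R by rewrite ler_norml; apply/andP; split; lra.
apply: le_trans h1 _.
have h2 : (q%:R : R) <= `|x j - x m|.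
  rewrite /x !natrD !natrM (addrC 1) addrKA -mulrBl normrM (ger0_norm (ler0n _ _)).
  rewrite ler_peMl ?ler0n //.
  have [jm|mj'] := ltnP j m.
    by rewrite distrC -natrB ?(ltnW jm) // ger0_norm ?ler0n // ler1n subn_gt0.
  have mj2 : (m < j)%N by rewrite ltn_neqAle mj' andbT; move: mj; rewrite -val_eqE.
  by rewrite -natrB ?(ltnW mj2) // ger0_norm ?ler0n // ler1n subn_gt0.
apply: le_trans (ler_wpM2l _ h2); last by apply: mulr_ge0 => //; apply: ler0n.
rewrite -natrM -natrM ler_nat; nia.
Qed.

Lemma natdist (R : realDomainType) (j m : nat) : j != m -> 1 <= `|j%:R - m%:R : R|.
Proof.
move=> mj.
have [jm|mj'] := ltnP j m.
  by rewrite distrC -natrB ?(ltnW jm) // ger0_norm ?ler0n // ler1n subn_gt0.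
have mj2 : (m < j)%N by rewrite ltn_neqAle mj' andbT eq_sym.
by rewrite -natrB ?(ltnW mj2) // ger0_norm ?ler0n // ler1n subn_gt0.
Qed.

Lemma ynodes_inj (R : realFieldType) d :
  injective (fun j : nat => j%:R / d.+1%:R : R).
Proof.
move=> j k /(congr1 (fun z => z * d.+1%:R)); rewrite /= !divfK ?pnatr_eq0 //.
by move/eqP; rewrite eqr_nat => /eqP.
Qed.

Lemma ynodes01 (R : realFieldType) d (k : 'I_d.+1) :
  0 <= k%:R / d.+1%:R :> R /\ k%:R / d.+1%:R <= 1 :> R.
Proof.
split; first by apply: divr_ge0; apply: ler0n.
by rewrite ler_pdivrMr ?ltr0Sn // mul1r ler_nat ltnW.
Qed.

Lemma fix_bound (R : realFieldType) d (k : 'I_d.+1) (u : R) : 0 <= u <= 1 ->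
  `|(tnth (d.+1.-lagrange (fun j : nat => j%:R / d.+1%:R)) k : {poly R}).[u]|
    <= d.+1%:R ^+ d.
Proof.
move=> /andP[u0 u1].
apply: (@lag_bound R d.+1 _ (ltn0Sn d) (@ynodes_inj R d) k u); first exact: ler0n.
move=> m mk.
have [m0 m1] := @ynodes01 R d m.
have h1 : `|u - m%:R / d.+1%:R| <= 1.
  move: m0 m1; set w := m%:R / d.+1%:R => m0 m1.
  rewrite ler_norml; apply/andP; split; lra.
apply: le_trans h1 _.
rewrite -mulrBl normrM normfV (ger0_norm (ler0n _ _)) mulrCA mulfV ?pnatr_eq0 // mulr1.
by apply: natdist; move: mk; rewrite -val_eqE eq_sym.
Qed.

Theorem proposition5 (R : realType) (K d : nat) (sigm : R) (Gam : set (R -> R))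
  (ths : param R) (M : R) :
  (1 <= K)%N -> (1 <= d)%N -> 0 < sigm < 1 ->
  (forall g, Gam g -> is_density g) ->
  compact (Gam : set {ptws R -> R}) ->
  (* (Amax) *)
  (exists g : R -> R,
     [/\ (forall a b, 0 <= a -> a <= b -> g b <= g a),
         (forall a, 0 <= a -> 0 <= g a),
         g x @[x --> +oo] --> 0 &
         forall gam, Gam gam -> forall z, gam z <= g `|z|]) ->
  (* (Amin) *)
  (exists m : R -> R,
     [/\ (forall a b, 0 <= a -> a <= b -> m b <= m a),
         (forall a, 0 <= a -> 0 < m a) &
         forall gam, Gam gam -> forall z, m `|z| <= gam z]) ->
  inTheta K d sigm Gam ths ->
  0 < M ->
  let ClD := closure (Dset ths K d sigm Gam M : set {uniform` `[0%R, 1%R] -> R}) in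
  compact ClD /\
  (forall f, ClD f -> {within `[0%R, 1%R], continuous f}).
Proof.
move=> K1 d1 _ _ _ _ _ inThs M0 ClD.
set C := M + normDelta ths.
set B : R := d.+1%:R * (C * (2 * d.+1%:R) ^+ d).
pose y := fun j : nat => j%:R / d.+1%:R : R.
pose l := fun k : 'I_d.+1 => (tnth (d.+1.-lagrange y) k : {poly R}).
pose Pa := fun a : 'rV[R]_d.+1 => \sum_k a ord0 k *: l k.
pose phi := fun a : 'rV[R]_d.+1 => (horner (Pa a) : {uniform` `[0%R, 1%R] -> R}).
pose box := [set v : 'rV[R]_d.+1 | forall i, [set` `[-B, B]] (v ord0 i)].
have cbox : compact box.
  by apply: (@rV_compact _ _ (fun=> [set` `[-B, B]])) => i; exact: segment_compact.
have phic : continuous phi.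
  move=> a; apply/(@cvg_app_entourageP _ _ phi (nbhs a) (nbhs_filter a) (phi a)) => A; rewrite uniform_entourage => -[E eE sA].
  rewrite -entourage_ballE in eE; case: eE => e /= e0 sE.
  set L : R := d.+1%:R ^+ d.
  have L0 : 0 < L by rewrite exprn_gt0 // ltr0Sn.
  pose dl := e / (2 * (d.+1%:R * L)).
  have dl0 : 0 < dl by rewrite divr_gt0 // !mulr_gt0 // ltr0Sn.
  apply: filterS (nbhsx_ballx a dl dl0) => b [_ hb].
  apply: sA => t t01 /=; apply: sE => /=; rewrite /ball /=.
  have t01' : 0 <= t <= 1 by move: t01; rewrite /= in_itv.
  rewrite /phi /Pa !horner_sum -sumrB.
  under eq_bigr do rewrite !hornerZ -mulrBl.
  apply: (le_lt_trans (ler_norm_sum _ _ _)).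
  apply: (@le_lt_trans _ _ (\sum_(k < d.+1) (dl * L))).
    apply: ler_sum => k _; rewrite normrM; apply: ler_pM => //.
      by have := hb ord0 k; rewrite /ball /= => /ltW.
    exact: fix_bound.
  rewrite sumr_const card_ord -mulr_natl.
  have -> : d.+1%:R * (dl * L) = e / 2.
    rewrite /dl; field.
    by rewrite gt_eqF //=.
  lra.
have cphi : compact (phi @` box).
  by apply: continuous_compact => //; exact: continuous_subspaceT.
have Dsub : Dset ths K d sigm Gam M `<=` phi @` box.
  move=> f [n [th [x [r [[nK _] [[[_ _ _ _ sT] _] [[_ hb] _] ->]]]]]].
  have [_ _ _ _ sTs] := inThs.
  set p := pT x - pT r.
  have sp : (size p <= d.+1)%N.
    by rewrite (leq_trans (size_polyD _ _)) // size_polyN geq_max sT sTs.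
  pose P := p \Po (n%:R *: 'X).
  have HP u : P.[u] = p.[n%:R * u] by rewrite horner_comp hornerZ hornerX.
  have sP : (size P <= d.+1)%N.
    apply: leq_trans (size_comp_poly_leq _ _) _.
    have : (size (n%:R *: 'X : {poly R}) <= 2)%N.
      by rewrite (leq_trans (size_scale_leq _ _)) // size_polyX.
    move: sp; set s1 := size p; set s2 := size _; nia.
  have dn : (d.+1 <= n)%N by nia.
  have hbound : forall i, (1 <= i <= n)%N -> `|p.[i%:R]| <= C.
    by move=> i hi; have := hb i hi; rewrite /p !hornerE distrC.
  have hg := @grid_bound R d n p C sp dn hbound.
  exists (\row_k P.[y k]).
    move=> i; rewrite mxE /= in_itv /= -ler_norml HP; apply: hg.
    have [y0 y1] := @ynodes01 R d i.
    apply/andP; split; first by apply: mulr_ge0 => //; exact: ler0n.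
    by rewrite ler_piMr ?ler0n.
  apply/funext => u /=.
  have -> : (pT x).[n%:R * u] - (pT r).[n%:R * u] = P.[u] by rewrite HP /p !hornerE.
  rewrite [in RHS](lagrange_gen (ltn0Sn d) (@ynodes_inj R d) sP) /Pa !horner_sum.
  rewrite /phi /Pa horner_sum.
  by apply: eq_bigr => k _; rewrite hornerZ hornerCM mxE.
have ClDsub : ClD `<=` closure (phi @` box) by exact: closureS.
split.
  have h1 := compact_closure_unif _ _ cphi. have h2 := @closed_closure _ (Dset ths K d sigm Gam M : set {uniform` `[0%R, 1%R] -> R}). exact: (subclosed_compact h2 h1 ClDsub).
move=> f /ClDsub; rewrite closureEcvg => -[G PG [Gf GD]].
apply: (uniform_limit_continuous_subspace PG _ Gf).
have Gphi : G (phi @` box) by apply: GD => z.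
apply: filterS Gphi => g [a _ <-].
have hc : continuous (horner (Pa a)) by move=> x; exact: continuous_horner.
have := @continuous_subspaceT R R `[0%R, 1%R] (horner (Pa a)) hc. exact.
Qed.
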